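(* Let $G$ be an SE-graph and let $P,Q$ be standard, weakly intersecting directed paths in $G$ such that $\{\alpha(s_P),\alpha(t_P)\}\cap\{\alpha(s_Q),\alpha(t_Q)\}\cap\mathbb R_{>0}=\emptyset$. Then $w(P)w(Q)=w(Q)w(P)$.
   Context: Fix a field $\mathbb K$, $q\in\mathbb K^\ast$. An SE-graph is a finite directed graph $G=(V,E)$ embedded in the plane (planar) whose edges are horizontal directed to the right (H-edges) or vertical directed downward (V-edges), with sources $r_1,\dots,r_m$ on a vertical line in this order upward and sinks $c_1,\dots,c_n$ on a horizontal line in order left to right, sources incident only to H-edges and sinks only to V-edges, every vertex lying on a directed source-to-sink path. Here the sources lie on the ray $\{0\}\times\mathbb R_{\ge0}$ and the sinks on the ray $\mathbb R_{\ge 0}\times\{0\}$; a point $v$ has coordinates $(\alpha(v),\beta(v))$. Standing convention: two vertices have the same first (resp. second) coordinate if and only if they lie on a common vertical (resp. horizontal) directed path of $G$. Let $W$ be the inner vertices (neither sources nor sinks); $\mathcal L_G$ is the $\mathbb K$-algebra of Laurent polynomials in $W$ with, for distinct $u,v\in W$: $uv=qvu$ if there is a directed horizontal path from $u$ to $v$; $vu=quv$ if there is a directed vertical path from $u$ to $v$; $uv=vu$ otherwise. Edge weights: $w(e)=v$ if $e=(u,v)$ with $u$ a source; $w(e)=u^{-1}v$ for an H-edge $e=(u,v)$ with $u,v\in W$; $w(e)=1$ for V-edges. The weight of a directed path $e_1\cdots e_k$ is $w(e_1)\cdots w(e_k)$. For a directed path $P$, $s_P$ and $t_P$ are its first and last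 vertices. $P$ is standard if it contains at least one H-edge. Directed paths $P,Q$ are weakly intersecting if $P\cap Q=\{s_P,t_P\}\cap\{s_Q,t_Q\}$ (as point sets in the plane). *)

(* Defs.v *)
From HB Require Import structures.
From mathcomp Require Import all_boot all_order all_algebra.
From mathcomp Require Import reals.
Set Implicit Arguments. Unset Strict Implicit. Unset Printing Implicit Defensive.
Import Order.TTheory GRing.Theory Num.Theory.
Local Open Scope ring_scope.

Section SEGraph.
Variables (R : realType) (V : finType) (E : rel V) (alpha beta : V -> R).

Definition pt (v : V) : R * R := (alpha v, beta v).

Definition Hedge (u v : V) : bool := (beta u == beta v) && (alpha u < alpha v).
Definition Vedge (u v : V) : bool := (alpha u == alpha v) && (beta v < beta u).

Definition HE : rel V := fun u v => E u v && Hedge u v.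
Definition VE : rel V := fun u v => E u v && Vedge u v.

Definition hpath (u v : V) : bool := connect HE u v.
Definition vpath (u v : V) : bool := connect VE u v.

Definition onSeg (a b z : R * R) : Prop :=
  exists t : R, [/\ 0 <= t, t <= 1,
    z.1 = (1 - t) * a.1 + t * b.1 & z.2 = (1 - t) * a.2 + t * b.2].

Definition SE_graph (Src Snk : {set V}) : Prop :=
  [/\
      injective pt,
      (forall u v, E u v -> Hedge u v || Vedge u v),
      (* planar embedding: distinct edges meet only at common end vertices *)
      (forall u v u' v', E u v -> E u' v' -> (u, v) != (u', v') ->
         forall z, onSeg (pt u) (pt v) z -> onSeg (pt u') (pt v') z ->
           exists2 w, z = pt w & (w \in [:: u; v]) && (w \in [:: u'; v'])),
      (forall u v w, E u v -> onSeg (pt u) (pt v) (pt w) -> w = u \/ w = v)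
    & [/\ [disjoint Src & Snk],
          (forall s, s \in Src ->
             [/\ alpha s = 0, 0 <= beta s, (forall v, ~~ E v s)
               & (forall v, E s v -> Hedge s v)]),
          (forall t, t \in Snk ->
             [/\ beta t = 0, 0 <= alpha t, (forall v, ~~ E t v)
               & (forall v, E v t -> Vedge v t)]),
          (forall v, exists s, exists t,
             [/\ s \in Src, t \in Snk, connect E s v & connect E v t])
        &
          (forall u v, ~~ ((u \in Src) && (v \in Src)) ->
             (alpha u = alpha v <-> vpath u v \/ vpath v u)) /\
          (forall u v, ~~ ((u \in Snk) && (v \in Snk)) ->
             (beta u = beta v <-> hpath u v \/ hpath v u))]].

(* a directed path is given by its first vertex s and the list p of the
   remaining vertices, with [path E s p]; its last vertex is [last s p] *)
Definition pedges (s : V) (p : seq V) : seq (V * V) := zip (s :: p) p.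

Definition standard (s : V) (p : seq V) : bool :=
  has (fun e => Hedge e.1 e.2) (pedges s p).

Definition ptset (s : V) (p : seq V) (z : R * R) : Prop :=
  z = pt s \/ exists2 e, e \in pedges s p & onSeg (pt e.1) (pt e.2) z.

Definition weakly_intersecting (sP : V) (p : seq V) (sQ : V) (r : seq V) : Prop :=
  forall z, (ptset sP p z /\ ptset sQ r z) <->
    ((z = pt sP \/ z = pt (last sP p)) /\ (z = pt sQ \/ z = pt (last sQ r))).

Section Weights.
Variables (Src Snk : {set V}) (K : fieldType) (A : unitAlgType K) (x : V -> A).

Definition inner (v : V) : bool := (v \notin Src) && (v \notin Snk).

(* the elements x v (v inner) are invertible and satisfy the defining
   q-commutation relations of L_G *)
Definition LG_relations (q : K) : Prop :=
  (forall v, inner v -> x v \is a GRing.unit) /\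
  (forall u v, inner u -> inner v -> u != v ->
     [/\ (hpath u v -> x u * x v = q *: (x v * x u)),
         (vpath u v -> x v * x u = q *: (x u * x v))
       & (~~ hpath u v -> ~~ hpath v u -> ~~ vpath u v -> ~~ vpath v u ->
            x u * x v = x v * x u)]).

Definition edge_weight (u v : V) : A :=
  if u \in Src then x v
  else if Hedge u v && inner u && inner v then (x u)^-1 * x v
  else 1.

Definition pweight (s : V) (p : seq V) : A :=
  \prod_(e <- pedges s p) edge_weight e.1 e.2.

End Weights.
End SEGraph.

(* Main.v *)
From HB Require Import structures.
From mathcomp Require Import all_boot all_order all_algebra.
From mathcomp Require Import reals.
From mathcomp Require Import lra zify ring.
Require Import Defs.
Import Order.TTheory GRing.Theory Num.Theory.
Local Open Scope ring_scope.
Set Implicit Arguments. Unset Strict Implicit.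

Section Paths.
Variables (V : finType) (E : rel V).

Lemma pedges_mem (s : V) p e : e \in pedges s p -> (e.1 \in s :: p) /\ (e.2 \in s :: p).
Proof.
elim: p s => [|v p IH] s //=; rewrite /pedges /= in_cons.
case/orP => [/eqP -> /=|/IH [h1 h2]]; first by rewrite !in_cons !eqxx orbT.
by rewrite in_cons h1 orbT in_cons h2 orbT.
Qed.

Lemma pedges_E s p e : path E s p -> e \in pedges s p -> E e.1 e.2.
Proof.
elim: p s => [|v p IH] s //= /andP [hsv hp]; rewrite /pedges /= in_cons.
case/orP => [/eqP -> //|]; exact: IH.
Qed.

Lemma pedges_cons (s v : V) (p : seq V) : pedges s (v :: p) = (s, v) :: pedges v p.
Proof. by []. Qed.

Lemma telescope (f : V -> int) (s : V) (p : seq V) :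
  \sum_(e <- pedges s p) (f e.2 - f e.1) = f (last s p) - f s.
Proof.
elim: p s => [|v p IH] s; first by rewrite big_nil subrr.
rewrite pedges_cons big_cons IH /=; lia.
Qed.
End Paths.

Section Geo.
Variables (R : realType) (V : finType) (E : rel V) (alpha beta : V -> R)
  (Src Snk : {set V}).
Hypothesis G : SE_graph E alpha beta Src Snk.

Lemma edge_HV u v : E u v -> Hedge alpha beta u v || Vedge alpha beta u v.
Proof. by case: G => _ h _ _ _; apply: h. Qed.

Lemma HV_excl u v : Hedge alpha beta u v -> Vedge alpha beta u v -> False.
Proof. by rewrite /Hedge /Vedge => /andP [_ h] /andP [/eqP e _]; move: h; rewrite e ltxx. Qed.

Lemma edge_mono u v : E u v -> alpha u <= alpha v /\ beta v <= beta u.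
Proof.
move/edge_HV; rewrite /Hedge /Vedge => /orP [] /andP [/eqP e h].
  by rewrite e lexx ltW.
by rewrite e lexx ltW.
Qed.

Lemma path_mono s p : path E s p -> forall w, w \in s :: p ->
  alpha s <= alpha w /\ beta w <= beta s.
Proof.
elim: p s => [|v p IH] s /=.
  by move=> _ w; rewrite inE => /eqP ->; rewrite !lexx.
move=> /andP [hsv hp] w; rewrite in_cons => /orP [/eqP -> | hw]; first by rewrite !lexx.
have [h1 h2] := IH v hp w hw; have [h3 h4] := edge_mono hsv.
split; [exact: le_trans h3 h1 | exact: le_trans h2 h4].
Qed.

Lemma connect_mono u v : connect E u v -> alpha u <= alpha v.
Proof.
case/connectP => p hp ->; have [] // := path_mono hp (w:=last u p).
exact: mem_last.
Qed.

Lemma src_prop s : s \in Src ->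
  [/\ alpha s = 0, 0 <= beta s, (forall v, ~~ E v s) & (forall v, E s v -> Hedge alpha beta s v)].
Proof. by case: G => _ _ _ _ [_ h _ _ _]; apply: h. Qed.

Lemma snk_prop t : t \in Snk ->
  [/\ beta t = 0, 0 <= alpha t, (forall v, ~~ E t v) & (forall v, E v t -> Vedge alpha beta v t)].
Proof. by case: G => _ _ _ _ [_ _ h _ _]; apply: h. Qed.

Lemma alpha_ge0 v : 0 <= alpha v.
Proof.
case: G => _ _ _ _ [_ _ _ h _]; have [s [t [hs _ hsv _]]] := h v.
have [a0 _ _ _] := src_prop hs; rewrite -a0; exact: connect_mono.
Qed.

Lemma HE_path u p : path (HE E alpha beta) u p -> forall w, w \in p ->
  beta w = beta u /\ alpha u < alpha w.
Proof.
elim: p u => [|v p IH] u //= /andP [/andP [_ /andP [/eqP e1 h1]] hp] w.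
rewrite in_cons => /orP [/eqP -> | hw]; first by [].
have [h2 h3] := IH v hp w hw; rewrite h2 -e1; split=> //; exact: lt_trans h1 h3.
Qed.

Lemma VE_path u p : path (VE E alpha beta) u p -> forall w, w \in p ->
  alpha w = alpha u /\ beta w < beta u.
Proof.
elim: p u => [|v p IH] u //= /andP [/andP [_ /andP [/eqP e1 h1]] hp] w.
rewrite in_cons => /orP [/eqP -> | hw]; first by [].
have [h2 h3] := IH v hp w hw; rewrite h2 -e1; split=> //; exact: lt_trans h3 h1.
Qed.

Lemma hpath_prop u v : hpath E alpha beta u v -> beta u = beta v /\ (u = v \/ alpha u < alpha v).
Proof.
case/connectP => p; case: p => [_ -> | w p hp ->]; first by split; [|left].
have [] := HE_path hp (mem_last w p); split; [by [] | by right].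
Qed.

Lemma vpath_prop u v : vpath E alpha beta u v -> alpha u = alpha v /\ (u = v \/ beta v < beta u).
Proof.
case/connectP => p; case: p => [_ -> | w p hp ->]; first by split; [|left].
have [] := VE_path hp (mem_last w p); split; [by [] | by right].
Qed.

Lemma alpha_pos v : v \notin Src -> 0 < alpha v.
Proof.
move=> hv; rewrite lt_neqAle alpha_ge0 andbT; apply/negP => /eqP a0.
case: G => _ _ _ _ [_ _ _ h [cA _]]; have [s [t [hs _ _ _]]] := h v.
have [as0 _ nin hout] := src_prop hs.
have a0' : alpha v = alpha s by rewrite -a0 as0.
have hvs : ~~ ((v \in Src) && (s \in Src)) by rewrite (negbTE hv).
have [/(_ a0') hd _] := cA v s hvs; case: hd => /connectP [p].
- case/lastP: p => [_ /= e | p z]; first by move: hv; rewrite -e hs.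
  rewrite rcons_path last_rcons => /andP [_ /andP [he _]] e.
  by move: (nin (last v p)); rewrite e he.
- case: p => [_ /= e | z p /= /andP [/andP [he hV] _] _]; first by move: hv; rewrite e hs.
  by have := HV_excl (hout _ he) hV.
Qed.
End Geo.

Section Seg.
Variable R : realType.

Lemma onSeg_x (a b : R * R) c : a.2 = b.2 -> a.1 < b.1 -> a.1 <= c <= b.1 ->
  onSeg a b (c, a.2).
Proof.
move=> e lt /andP [h1 h2]; have d0 : b.1 - a.1 != 0 by rewrite subr_eq0 gt_eqF.
have dp : 0 < b.1 - a.1 by rewrite subr_gt0.
exists ((c - a.1) / (b.1 - a.1)); split => /=.
- by rewrite divr_ge0 // ?subr_ge0 // ltW.
- by rewrite ler_pdivrMr // mul1r lerD2r.
- by field.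
- by rewrite -e; ring.
Qed.

Lemma onSeg_y (a b : R * R) c : a.1 = b.1 -> b.2 < a.2 -> b.2 <= c <= a.2 ->
  onSeg a b (a.1, c).
Proof.
move=> e lt /andP [h1 h2]; have d0 : a.2 - b.2 != 0 by rewrite subr_eq0 gt_eqF.
have dp : 0 < a.2 - b.2 by rewrite subr_gt0.
exists ((a.2 - c) / (a.2 - b.2)); split => /=.
- by rewrite divr_ge0 // ?subr_ge0 // ltW.
- by rewrite ler_pdivrMr // mul1r lerD2l lerN2.
- by rewrite -e; ring.
- by field.
Qed.

Lemma onSeg_end (a b : R * R) : onSeg a b b.
Proof. by exists 1; split=> //=; ring. Qed.

Variables (V : finType) (alpha beta : V -> R).
Notation pt := (pt alpha beta).
Notation ptset := (ptset alpha beta).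

Lemma ptset_lift s v p z : ptset v p z -> ptset s (v :: p) z.
Proof.
case=> [-> | [e he hz]]; right; first by exists (s, v); [rewrite mem_head | exact: onSeg_end].
by exists e => //; rewrite pedges_cons in_cons he orbT.
Qed.

Lemma ptset_pt s p u : u \in s :: p -> ptset s p (pt u).
Proof.
elim: p s => [|v p IH] s; first by rewrite inE => /eqP ->; left.
rewrite in_cons => /orP [/eqP -> | /IH h]; [by left | exact: ptset_lift].
Qed.

Lemma ptset_seg s p e z : e \in pedges s p -> onSeg (pt e.1) (pt e.2) z -> ptset s p z.
Proof. by move=> he hz; right; exists e. Qed.
End Seg.

Section Contig.
Variables (R : realType) (V : finType) (E : rel V) (alpha beta : V -> R)
  (Src Snk : {set V}).
Hypothesis G : SE_graph E alpha beta Src Snk.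

Lemma col_contig s p : path E s p -> forall u w, u \in s :: p -> w \in s :: p ->
  alpha u = alpha w -> forall y, beta w <= y <= beta u ->
  ptset alpha beta s p (alpha u, y).
Proof.
elim: p s => [|v p IH] s.
  move=> _ u w; rewrite !inE => /eqP -> /eqP -> _ y /andP [h1 h2].
  have -> : y = beta s by apply/eqP; rewrite eq_le h1 h2.
  by left.
move=> hP; move: (hP) => /= /andP [hsv hp] u w; rewrite in_cons => /orP [/eqP eu | hu];
  rewrite in_cons => /orP [/eqP ew | hw] eq y /andP [h1 h2].
- subst u w; have -> : y = beta s by apply/eqP; rewrite eq_le h1 h2.
  by left.
- subst u; have [m1 m2] := path_mono G hp hw; have [m3 m4] := edge_mono G hsv.
  have avs : alpha v = alpha s by apply/eqP; rewrite eq_le m3 eq m1.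
  have hV : Vedge alpha beta s v.
    move: (edge_HV G hsv); rewrite /Hedge avs ltxx andbF /=; exact.
  move: (hV); rewrite /Vedge => /andP [_ bvs].
  case: (leP (beta v) y) => hy.
    apply: (ptset_seg (e := (s, v))); first by rewrite pedges_cons mem_head.
    by apply: onSeg_y => //=; rewrite hy h2.
  apply: ptset_lift; rewrite -avs; apply: (IH v hp v w) => //; first exact: mem_head.
    by rewrite avs.
  by rewrite h1 ltW.
- subst w; have hu' : u \in s :: v :: p by rewrite in_cons hu orbT.
  have [m1 m2] := path_mono G hP hu'.
  have -> : y = beta u by apply/eqP; rewrite eq_le h2 (le_trans m2 h1).
  exact: ptset_pt hu'.
- by apply: ptset_lift; apply: (IH v hp u w) => //; rewrite h1 h2.
Qed.
End Contig.
Section Alg.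
Variables (K : fieldType) (A : unitAlgType K).

Lemma comm_invl (a b : A) (l : K) : a \is a GRing.unit -> l != 0 ->
  a * b = l *: (b * a) -> a^-1 * b = l^-1 *: (b * a^-1).
Proof.
move=> ua l0 h.
have e : b * a^-1 = l *: (a^-1 * b).
  have -> : b * a^-1 = a^-1 * (a * b) * a^-1 by rewrite mulrA mulVr // mul1r.
  by rewrite h -scalerAr -scalerAl !mulrA mulrK.
by rewrite e scalerA mulVf // scale1r.
Qed.

Lemma comm_invr (a b : A) (l : K) : b \is a GRing.unit -> l != 0 ->
  a * b = l *: (b * a) -> a * b^-1 = l^-1 *: (b^-1 * a).
Proof.
move=> ub l0 h.
have e : b^-1 * a = l *: (a * b^-1).
  have -> : b^-1 * a = b^-1 * (a * b) * b^-1 by rewrite !mulrA mulrK.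
  by rewrite h -scalerAr -scalerAl !mulrA mulVr // mul1r.
by rewrite e scalerA mulVf // scale1r.
Qed.

Definition sgb (b : bool) : int := if b then 1 else -1.
Definition lv (e : bool) (a : A) := if e then a else a^-1.

Lemma comm_lv (a b : A) (l : K) (e1 e2 : bool) :
  a \is a GRing.unit -> b \is a GRing.unit -> l != 0 ->
  a * b = l *: (b * a) ->
  lv e1 a * lv e2 b = (l ^ (sgb e1 * sgb e2)) *: (lv e2 b * lv e1 a).
Proof.
move=> ua ub l0 h; have li0 : l^-1 != 0 by rewrite invr_eq0.
case: e1; case: e2 => /=; rewrite /sgb ?mulr1 ?mul1r ?mulrNN ?mulr1.
- by rewrite expr1z.
- by rewrite exprN1; apply: (comm_invr ub l0 h).
- by rewrite exprN1; apply: (comm_invl ua l0 h).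
- rewrite expr1z. have h1 := comm_invr ub l0 h.
  have := comm_invl ua li0 h1. by rewrite invrK.
Qed.

Variables (T : eqType) (q : K) (val : T -> A) (kap : T -> T -> int).
Hypothesis q0 : q != 0.

Lemma prod_comm1 (l : T) (t : seq T) :
  (forall m, m \in t -> val l * val m = q ^ kap l m *: (val m * val l)) ->
  val l * \prod_(m <- t) val m =
  q ^ (\sum_(m <- t) kap l m) *: (\prod_(m <- t) val m * val l).
Proof.
elim: t => [|m t IH] H; first by rewrite !big_nil mulr1 mul1r expr0z scale1r.
rewrite !big_cons mulrA H ?mem_head // -scalerAl -[val m * val l * _]mulrA IH; last first.
  by move=> m' hm; apply: H; rewrite in_cons hm orbT.
by rewrite -scalerAr scalerA expfzDr // mulrA.
Qed.

Lemma prod_comm (s t : seq T) :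
  (forall l m, l \in s -> m \in t -> val l * val m = q ^ kap l m *: (val m * val l)) ->
  \prod_(l <- s) val l * \prod_(m <- t) val m =
  q ^ (\sum_(l <- s) \sum_(m <- t) kap l m) *: (\prod_(m <- t) val m * \prod_(l <- s) val l).
Proof.
elim: s => [|l s IH] H; first by rewrite !big_nil mulr1 mul1r expr0z scale1r.
rewrite !big_cons -mulrA IH; last first.
  by move=> l' m hl hm; apply: H => //; rewrite in_cons hl orbT.
rewrite -scalerAr [val l * (_ * _)]mulrA prod_comm1; last by move=> m hm; apply: H; rewrite ?mem_head.
rewrite -scalerAl scalerA -expfzDr // addrC. by rewrite mulrA.
Qed.
End Alg.

Section Main.
Variables (R : realType) (V : finType) (E : rel V) (alpha beta : V -> R)
  (Src Snk : {set V}) (K : fieldType) (q : K) (A : unitAlgType K) (x : V -> A)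
  (sP : V) (p : seq V) (sQ : V) (r : seq V).
Hypothesis G : SE_graph E alpha beta Src Snk.
Hypothesis q0 : q != 0.
Hypothesis LG : LG_relations E alpha beta Src Snk x q.
Hypothesis pP : path E sP p.
Hypothesis pQ : path E sQ r.
Hypothesis WI : weakly_intersecting alpha beta sP p sQ r.
Hypothesis AC : forall a : R, 0 < a ->
     (a = alpha sP \/ a = alpha (last sP p)) ->
     (a = alpha sQ \/ a = alpha (last sQ r)) -> False.

Definition crow (u v : V) : int := if beta u == beta v then
  (if alpha u < alpha v then 1 else if alpha v < alpha u then -1 else 0) else 0.
Definition ccol (u v : V) : int := if alpha u == alpha v then
  (if beta v < beta u then -1 else if beta u < beta v then 1 else 0) else 0.

Lemma scale_flip (a b : A) (l : K) : l != 0 -> a = l *: b -> b = l^-1 *: a.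
Proof. by move=> l0 ->; rewrite scalerA mulVf // scale1r. Qed.

Lemma xcomm u v : inner Src Snk u -> inner Src Snk v ->
  x u * x v = q ^ (crow u v + ccol u v) *: (x v * x u).
Proof.
move=> iu iv; case: LG => _ LGr.
have [-> | neq] := eqVneq u v.
  by rewrite /crow /ccol !eqxx !ltxx add0r expr0z scale1r.
have nvu : v != u by rewrite eq_sym.
have [h1 h2 h3] := LGr u v iu iv neq.
have [h1' h2' h3'] := LGr v u iv iu nvu.
case: G => _ _ _ _ [_ _ _ _ [cA cB]].
move: (iu) (iv); rewrite /inner => /andP [us un] /andP [vs vn].
have nss : ~~ ((u \in Src) && (v \in Src)) by rewrite (negbTE us).
have ntt : ~~ ((u \in Snk) && (v \in Snk)) by rewrite (negbTE un).
have [eb | eb] := eqVneq (beta u) (beta v).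
  have [/(_ eb) [] hp _] := cB u v ntt.
    have [_ [e|lt]] := hpath_prop hp; first by rewrite e eqxx in neq.
    rewrite /crow /ccol eb eqxx lt (lt_eqF lt) addr0 expr1z; exact: h1.
  have [_ [e|lt]] := hpath_prop hp; first by rewrite e eqxx in nvu.
  rewrite /crow /ccol eb eqxx (lt_gtF lt) lt (gt_eqF lt) addr0 exprN1.
  by apply: scale_flip => //; exact: h1'.
have -> : crow u v = 0 by rewrite /crow (negbTE eb).
rewrite add0r.
have [ea | ea] := eqVneq (alpha u) (alpha v).
  have [/(_ ea) [] hp _] := cA u v nss.
    have [_ [e|lt]] := vpath_prop hp; first by rewrite e eqxx in neq.
    rewrite /ccol ea eqxx lt exprN1.
    by apply: scale_flip => //; exact: h2.
  have [_ [e|lt]] := vpath_prop hp; first by rewrite e eqxx in nvu.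
  rewrite /ccol ea eqxx (lt_gtF lt) lt expr1z; exact: h2'.
rewrite /ccol (negbTE ea) expr0z scale1r; apply: h3.
- by apply/negP => /hpath_prop [e _]; rewrite e eqxx in eb.
- by apply/negP => /hpath_prop [e _]; rewrite e eqxx in eb.
- by apply/negP => /vpath_prop [e _]; rewrite e eqxx in ea.
- by apply/negP => /vpath_prop [e _]; rewrite e eqxx in ea.
Qed.

Definition lets (e : V * V) : seq (V * bool) :=
  if e.1 \in Src then [:: (e.2, true)]
  else if Hedge alpha beta e.1 e.2 && inner Src Snk e.1 && inner Src Snk e.2
  then [:: (e.1, false); (e.2, true)] else [::].
Definition val (l : V * bool) : A := lv l.2 (x l.1).
Definition LL (s : V) (t : seq V) := flatten [seq lets e | e <- pedges s t].
Definition kappa (l m : V * bool) : int :=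
  (crow l.1 m.1 + ccol l.1 m.1) * (sgb l.2 * sgb m.2).

Lemma pweight_LL s t : pweight alpha beta Src Snk x s t = \prod_(l <- LL s t) val l.
Proof.
rewrite /pweight /LL big_flatten big_map; apply: eq_bigr => e _.
rewrite /edge_weight /lets /val; case: ifP => _; first by rewrite big_cons big_nil /= mulr1.
by case: ifP => _; rewrite ?big_cons ?big_nil /= ?mulr1.
Qed.

Lemma edge_inner s t e : path E s t -> e \in pedges s t -> e.1 \in Src ->
  inner Src Snk e.2 /\ Hedge alpha beta e.1 e.2.
Proof.
move=> hp he hs; have hE := pedges_E hp he.
have [_ _ nin hout] := src_prop G hs; have hH := hout _ hE.
split=> //; rewrite /inner; apply/andP; split.
  by apply/negP => /(src_prop G) [_ _ /(_ e.1) h _]; rewrite hE in h.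
apply/negP => /(snk_prop G) [_ _ _ /(_ e.1 hE) hV]; exact: HV_excl hH hV.
Qed.

Lemma LL_inner s t l : path E s t -> l \in LL s t ->
  inner Src Snk l.1 /\ l.1 \in s :: t.
Proof.
move=> hp /flattenP [ls /mapP [e he ->]]; have [m1 m2] := pedges_mem he.
rewrite /lets; case: ifP => hs.
  by rewrite inE => /eqP -> /=; have [] := edge_inner hp he hs.
case: ifP => // /andP [/andP [_ i1] i2]; rewrite !inE => /orP [] /eqP -> //.
Qed.

Lemma letter_comm l m : inner Src Snk l.1 -> inner Src Snk m.1 ->
  val l * val m = q ^ kappa l m *: (val m * val l).
Proof.
move=> il im; case: LG => un _.
have := comm_lv l.2 m.2 (un _ il) (un _ im) (expfz_neq0 _ q0) (xcomm il im).
by rewrite exprz_exp.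
Qed.

Lemma noCommon z : ptset alpha beta sP p z -> ptset alpha beta sQ r z -> 0 < z.1 -> False.
Proof.
move=> h1 h2 hz; have [e1 e2] := (WI z).1 (conj h1 h2).
have ha : z.1 = alpha sP \/ z.1 = alpha (last sP p) by case: e1 => ->; [left|right].
have hb : z.1 = alpha sQ \/ z.1 = alpha (last sQ r) by case: e2 => ->; [left|right].
exact: AC hz ha hb.
Qed.

Lemma Hedge_prop u v : Hedge alpha beta u v -> beta u = beta v /\ alpha u < alpha v.
Proof. by case/andP => /eqP. Qed.

Lemma sepH e f : e \in pedges sP p -> f \in pedges sQ r ->
  Hedge alpha beta e.1 e.2 -> Hedge alpha beta f.1 f.2 -> beta e.1 = beta f.1 ->
  alpha e.2 < alpha f.1 \/ alpha f.2 < alpha e.1.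
Proof.
move=> he hf /Hedge_prop [be ae] /Hedge_prop [bf af] bef.
case: (ltP (alpha e.2) (alpha f.1)) => h1; first by left.
case: (ltP (alpha f.2) (alpha e.1)) => h2; first by right.
exfalso; have [_ me2] := pedges_mem he; have [_ mf2] := pedges_mem hf.
have pe : 0 < alpha e.2 := le_lt_trans (alpha_ge0 G _) ae.
have pf : 0 < alpha f.2 := le_lt_trans (alpha_ge0 G _) af.
case: (leP (alpha e.2) (alpha f.2)) => h3.
  apply: (@noCommon (pt alpha beta e.2)) => //; first exact: ptset_pt.
  apply: (ptset_seg hf); rewrite /pt -be bef; apply: onSeg_x => //=.
  by rewrite h1 h3.
apply: (@noCommon (pt alpha beta f.2)) => //; last exact: ptset_pt.
apply: (ptset_seg he); rewrite /pt -bf -bef; apply: onSeg_x => //=.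
by rewrite h2 ltW.
Qed.

Lemma lets_shape s t e : path E s t -> e \in pedges s t ->
  lets e = [::] \/ (Hedge alpha beta e.1 e.2 /\
   ((e.1 \in Src /\ lets e = [:: (e.2, true)]) \/
    (e.1 \notin Src /\ lets e = [:: (e.1, false); (e.2, true)]))).
Proof.
move=> hp he; rewrite /lets; case: ifP => hs.
  by right; have [_ hH] := edge_inner hp he hs; split=> //; left.
case: ifP => [/andP [/andP [hH _] _]|_]; last by left.
by right; split=> //; right; split=> //; rewrite hs.
Qed.

Definition ssg (l m : V * bool) : int := sgb l.2 * sgb m.2.

Lemma row_pair e f : e \in pedges sP p -> f \in pedges sQ r ->
  \sum_(l <- lets e) \sum_(m <- lets f) crow l.1 m.1 * ssg l m = 0.
Proof.
move=> he hf.
have [le|[hHe she]] := lets_shape pP he; first by rewrite le big_nil.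
have [lf|[hHf shf]] := lets_shape pQ hf.
  by rewrite lf; apply: big1 => l _; rewrite big_nil.
have [be ae] := Hedge_prop hHe; have [bf af] := Hedge_prop hHf.
have [k [c11 [c12 [c21 [c22 k0]]]]] : exists k, [/\ crow e.1 f.1 = k,
    crow e.1 f.2 = k, crow e.2 f.1 = k, crow e.2 f.2 = k &
    (e.1 \in Src -> f.1 \in Src -> k = 0)].
  have [eb|nb] := eqVneq (beta e.1) (beta f.1); last first.
    exists 0; rewrite /crow -be -bf (negbTE nb); split=> //.
  have [sl|sr] := sepH he hf hHe hHf eb.
    exists 1; rewrite /crow -be -bf eb eqxx.
    have l11 : alpha e.1 < alpha f.1 := lt_trans ae sl.
    have l12 : alpha e.1 < alpha f.2 := lt_trans l11 af.
    have l22 : alpha e.2 < alpha f.2 := lt_trans sl af.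
    rewrite l11 l12 sl l22; split=> // _ /(src_prop G) [a0 _ _ _].
    by move: sl; rewrite a0 ltNge (ltW (le_lt_trans (alpha_ge0 G _) ae)).
  exists (-1); rewrite /crow -be -bf eb eqxx.
  have l11 : alpha f.1 < alpha e.1 := lt_trans af sr.
  have l12 : alpha f.1 < alpha e.2 := lt_trans l11 ae.
  have l22 : alpha f.2 < alpha e.2 := lt_trans sr ae.
  rewrite (lt_gtF l11) (lt_gtF sr) (lt_gtF l12) (lt_gtF l22) l11 l12 sr l22.
  split=> // /(src_prop G) [a0 _ _ _].
  by move: sr; rewrite a0 ltNge (alpha_ge0 G).
case: she => [[s1 ->]|[s1 ->]]; case: shf => [[s2 ->]|[s2 ->]];
  rewrite !big_cons !big_nil /= /ssg /= ?c11 ?c12 ?c21 ?c22 /sgb.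
- by rewrite (k0 s1 s2); lia.
- lia.
- lia.
- lia.
Qed.

Lemma row_total : \sum_(l <- LL sP p) \sum_(m <- LL sQ r) crow l.1 m.1 * ssg l m = 0.
Proof.
rewrite /LL big_flatten big_map; apply: big1_seq => e /andP [_ he].
rewrite exchange_big big_flatten big_map; apply: big1_seq => f /andP [_ hf].
by rewrite exchange_big row_pair.
Qed.

Lemma interval_meet (a1 a2 b1 b2 : R) : b1 < a1 -> a2 < b2 ->
  exists y, (a2 <= y <= a1 \/ a1 <= y <= a2) /\ (b1 <= y <= b2 \/ b2 <= y <= b1).
Proof.
move=> h1 h2.
case: (leP a2 a1) => h3; case: (leP b1 b2) => h4.
- case: (leP a2 b1) => h5.
    by exists b1; split; left; apply/andP; split; lra.
  by exists a2; split; left; apply/andP; split; lra.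
- by exists b2; split; [left|right]; apply/andP; split; lra.
- by exists a1; split; [right|left]; apply/andP; split; lra.
- exfalso; lra.
Qed.

Lemma mismatch u v u' v' : u \in sP :: p -> u' \in sP :: p ->
  v \in sQ :: r -> v' \in sQ :: r ->
  alpha u = alpha v -> alpha u' = alpha u -> alpha v' = alpha u -> 0 < alpha u ->
  beta v < beta u -> beta u' < beta v' -> False.
Proof.
move=> hu hu' hv hv' e1 e2 e3 pos h1 h2.
have [y [hy1 hy2]] := interval_meet h1 h2.
apply: (@noCommon (alpha u, y)) => //.
- case: hy1 => hy.
    by apply: (col_contig G pP hu hu') => //; rewrite e2.
  by rewrite -e2; apply: (col_contig G pP hu' hu).
- case: hy2 => hy.
    by rewrite -e3; apply: (col_contig G pQ hv' hv) => //; rewrite e3 e1.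
  by rewrite e1; apply: (col_contig G pQ hv hv') => //; rewrite e3 e1.
Qed.

Lemma ccol_eq u v : alpha u = alpha v -> beta u != beta v ->
  ccol u v = if beta v < beta u then -1 else 1.
Proof.
move=> ea nb; rewrite /ccol ea eqxx; case: ltgtP => //.
by move=> e; rewrite e eqxx in nb.
Qed.

Lemma beta_ne u v : u \in sP :: p -> v \in sQ :: r -> alpha u = alpha v -> 0 < alpha u ->
  beta u != beta v.
Proof.
move=> hu hv ea pos; apply/negP => /eqP eb.
apply: (@noCommon (pt alpha beta u)) => //; first exact: ptset_pt.
rewrite /pt ea eb; change (alpha v, beta v) with (pt alpha beta v); exact: (ptset_pt alpha beta hv).
Qed.

Lemma ccol_const u v u' v' : u \in sP :: p -> u' \in sP :: p ->
  v \in sQ :: r -> v' \in sQ :: r ->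
  alpha u = alpha v -> alpha u' = alpha u -> alpha v' = alpha u -> 0 < alpha u ->
  ccol u v = ccol u' v'.
Proof.
move=> hu hu' hv hv' e1 e2 e3 pos.
have pos' : 0 < alpha u' by rewrite e2.
rewrite (ccol_eq e1 (beta_ne hu hv e1 pos)).
have e4 : alpha u' = alpha v' by rewrite e2 e3.
rewrite (ccol_eq e4 (beta_ne hu' hv' e4 pos')).
have n1 := beta_ne hu hv e1 pos; have n2 := beta_ne hu' hv' e4 pos'.
case: (ltP (beta v) (beta u)) => h1; case: (ltP (beta v') (beta u')) => h2 //.
- have h2' : beta u' < beta v' by rewrite lt_neqAle h2 andbT.
  by case: (mismatch hu hu' hv hv' e1 e2 e3 pos h1 h2').
- have h1' : beta u < beta v by rewrite lt_neqAle h1 andbT.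
  have e5 : alpha v = alpha u' by rewrite -e1 e2.
  by case: (mismatch hu' hu hv' hv e4 (esym e2) e5 pos' h2 h1').
Qed.

Definition Sg (g : R) : int :=
  if [pick u | (u \in sP :: p) && (alpha u == g)] is Some u then
    (if [pick v | (v \in sQ :: r) && (alpha v == g)] is Some v then ccol u v else 0)
  else 0.

Lemma S_eq u v : u \in sP :: p -> v \in sQ :: r -> alpha u = alpha v -> 0 < alpha u ->
  ccol u v = Sg (alpha u).
Proof.
move=> hu hv e pos; rewrite /Sg.
case: pickP => [u0 /andP [hu0 /eqP e0] | h]; last by have := h u; rewrite hu eqxx.
case: pickP => [v0 /andP [hv0 /eqP e1] | h]; last by have := h v; rewrite hv e eqxx.
exact: ccol_const.
Qed.

Definition ind (b : bool) : int := if b then 1 else 0.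

Lemma edge_alpha_eq s t e : path E s t -> e \in pedges s t -> e.1 \notin Src ->
  ~~ (Hedge alpha beta e.1 e.2 && inner Src Snk e.1 && inner Src Snk e.2) ->
  alpha e.1 = alpha e.2.
Proof.
move=> hp he ns nH; have hE := pedges_E hp he.
case/orP: (edge_HV G hE) => [hH | /andP [/eqP -> _] //].
exfalso; move: nH; rewrite hH /= /inner ns /=.
case: (boolP (e.1 \in Snk)) => [/(snk_prop G) [_ _ /(_ e.2) h _] | _ /=].
  by rewrite hE in h.
case: (boolP (e.2 \in Src)) => [/(src_prop G) [_ _ /(_ e.1) h _] | _ /=].
  by rewrite hE in h.
case: (boolP (e.2 \in Snk)) => [/(snk_prop G) [_ _ _ /(_ e.1 hE) hV] | //].
by have := HV_excl hH hV.
Qed.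

Lemma T_formula s t g : path E s t -> g != 0 ->
  \sum_(m <- LL s t) sgb m.2 * ind (alpha m.1 == g) =
  ind (alpha (last s t) == g) - ind (alpha s == g).
Proof.
move=> hp g0; rewrite -(telescope (fun v => ind (alpha v == g))).
rewrite /LL big_flatten big_map; apply: eq_big_seq => e he.
have [le|[hHe [[s1 ->]|[s1 ->]]]] := lets_shape hp he.
- have ns : e.1 \notin Src by move: le; rewrite /lets; case: ifP.
  have nH : ~~ (Hedge alpha beta e.1 e.2 && inner Src Snk e.1 && inner Src Snk e.2).
    by move: le; rewrite /lets (negbTE ns); case: ifP.
  by rewrite le big_nil (edge_alpha_eq hp he ns nH) subrr.
- have [a0 _ _ _] := src_prop G s1.
  rewrite big_cons big_nil /= a0 /ind [0 == g]eq_sym (negbTE g0) /sgb; case: (_ == g); lia.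
- by rewrite !big_cons big_nil /= /sgb /ind; case: (_ == g); case: (_ == g).
Qed.

Lemma LP_pos l : l \in LL sP p -> 0 < alpha l.1.
Proof. by case/(LL_inner pP) => /andP [ns _] _; exact: alpha_pos G _ ns. Qed.

Lemma TP_zero b : (b = alpha sQ \/ b = alpha (last sQ r)) ->
  \sum_(l <- LL sP p) sgb l.2 * ind (alpha l.1 == b) = 0.
Proof.
move=> hb; have [b0 | b0] := eqVneq b 0.
  apply: big1_seq => l /andP [_ hl]; have pos := LP_pos hl.
  rewrite b0 /ind; case: eqP => [e|]; [by rewrite e ltxx in pos | by rewrite mulr0].
rewrite (T_formula pP b0).
have bpos : 0 < b.
  rewrite lt_neqAle eq_sym b0 /=; case: hb => ->; exact: alpha_ge0 G _.
rewrite /ind; case: eqP => [e1|_]; first by case: (AC bpos (or_intror (esym e1)) hb).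
by case: eqP => [e1|_] //; case: (AC bpos (or_introl (esym e1)) hb).
Qed.

Lemma aux (S : R -> int) (a t s0 : R) (z : int) :
  z * (S a * (ind (t == a) - ind (s0 == a))) =
  S t * (z * ind (a == t)) - S s0 * (z * ind (a == s0)).
Proof.
rewrite [t == a]eq_sym [s0 == a]eq_sym /ind.
case: (eqVneq a t) => [e1|n1]; case: (eqVneq a s0) => [e2|n2]; subst => //=; ring.
Qed.

Lemma col_total : \sum_(l <- LL sP p) \sum_(m <- LL sQ r) ccol l.1 m.1 * ssg l m = 0.
Proof.
pose tQ := alpha (last sQ r); pose s0 := alpha sQ.
transitivity (\sum_(l <- LL sP p)
   (Sg tQ * (sgb l.2 * ind (alpha l.1 == tQ)) - Sg s0 * (sgb l.2 * ind (alpha l.1 == s0)))).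
  apply: eq_big_seq => l hl.
  have pos := LP_pos hl; have [_ mem] := LL_inner pP hl.
  transitivity (sgb l.2 * (Sg (alpha l.1) *
     \sum_(m <- LL sQ r) sgb m.2 * ind (alpha m.1 == alpha l.1))).
    rewrite !mulr_sumr; apply: eq_big_seq => m hm.
    have [_ memQ] := LL_inner pQ hm.
    rewrite /ssg /ind; case: (eqVneq (alpha m.1) (alpha l.1)) => e.
      rewrite -(S_eq mem memQ (esym e) pos); ring.
    rewrite /ccol eq_sym (negbTE e); ring.
  have g0 : alpha l.1 != 0 by rewrite gt_eqF.
  by rewrite (T_formula pQ g0) aux.
rewrite sumrB -!mulr_sumr (TP_zero (or_intror erefl)) (TP_zero (or_introl erefl)).
by rewrite !mulr0 subrr.
Qed.
End Main.

Unset Implicit Arguments.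

Theorem lemmaA1 (R : realType) (V : finType) (E : rel V) (alpha beta : V -> R)
    (Src Snk : {set V}) (K : fieldType) (q : K) (A : unitAlgType K) (x : V -> A)
    (sP : V) (p : seq V) (sQ : V) (r : seq V) :
  SE_graph E alpha beta Src Snk ->
  q != 0 ->
  LG_relations E alpha beta Src Snk x q ->
  path E sP p -> path E sQ r ->
  standard alpha beta sP p -> standard alpha beta sQ r ->
  weakly_intersecting alpha beta sP p sQ r ->
  (forall a : R, 0 < a ->
     (a = alpha sP \/ a = alpha (last sP p)) ->
     (a = alpha sQ \/ a = alpha (last sQ r)) -> False) ->
  pweight alpha beta Src Snk x sP p * pweight alpha beta Src Snk x sQ r =
  pweight alpha beta Src Snk x sQ r * pweight alpha beta Src Snk x sP p.
Proof.
move=> G q0 LG pP pQ _ _ WI AC.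
rewrite !(pweight_LL alpha beta Src Snk x).
rewrite (prod_comm (kap := kappa alpha beta) q0); last first.
  move=> l m hl hm; apply: (letter_comm G q0 LG).
    exact: (LL_inner G pP hl).1.
  exact: (LL_inner G pQ hm).1.
set S := (X in q ^ X).
have -> : S = 0.
  rewrite /S; transitivity (
    \sum_(l <- LL alpha beta Src Snk sP p) \sum_(m <- LL alpha beta Src Snk sQ r)
       crow alpha beta l.1 m.1 * ssg l m +
    \sum_(l <- LL alpha beta Src Snk sP p) \sum_(m <- LL alpha beta Src Snk sQ r)
       ccol alpha beta l.1 m.1 * ssg l m).
    rewrite -big_split; apply: eq_bigr => l _.
    rewrite -big_split; apply: eq_bigr => m _; by rewrite /kappa /ssg mulrDl.
  by rewrite (row_total G q0 pP pQ WI AC) (col_total G q0 pP pQ WI AC) addr0.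
by rewrite expr0z scale1r.
Qed.
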